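(* Let $T>0$, $L>0$, $V_{\max}>0$, $m_a>0$ and $\alpha_1>0$, and set $\alpha_2=0$. Call a continuous function $v:[0,T]\to\mathbb{R}$ admissible if $v(0)=0$, $0\le v(t)\le V_{\max}$ for all $t\in[0,T]$, $\int_0^T v(\tau)\,\mathrm{d}\tau\le L$, and $v$ is not identically zero. For admissible $v$, let $x(t)=\int_0^t v(\tau)\,\mathrm{d}\tau$, $$\mathcal{V}(v)=\frac{1}{T}\int_0^T\left[x(t)-\frac{1}{T}\int_0^T x(\tau)\,\mathrm{d}\tau\right]^2\mathrm{d}t,\qquad \mathcal{E}(v)=\frac{1}{2}m_a v^2(T)+\int_0^T\left(\alpha_1 v^2(t)+\alpha_2 v^3(t)\right)\mathrm{d}t,$$ and define the sensing energy efficiency $\mathcal{V}(v)/\mathcal{E}(v)$. Then the profile $$v^*(t)=\min\!\left(V_{\max},\frac{\pi L}{2T}\right)\sin\!\left(\frac{\pi t}{T}\right)$$ is admissible and maximizes $\mathcal{V}(v)/\mathcal{E}(v)$ over all admissible $v$; moreover, among all admissible profiles that maximize $\mathcal{V}(v)/\mathcal{E}(v)$, $v^*$ attains the largest value of $\mathcal{V}(v)$.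
   Context: Physical interpretation: a single movable antenna of mass $m_a$ moves along a linear track of length $L$ during a sensing interval $[0,T]$ with velocity profile $v(t)$; $\mathcal{V}(v)$ is the spatial variance of its trajectory (inversely proportional to the Cramér–Rao bound of direction-of-arrival estimation), $\mathcal{E}(v)$ is the mechanical energy consumed, with $\alpha_1$ the linear damping coefficient and $\alpha_2$ the quadratic aerodynamic drag coefficient (here $\alpha_2=0$, the linear-damping-dominated regime). *)

(* Defs.v *)
From Stdlib Require Import Reals.
From Coquelicot Require Import Coquelicot.
Open Scope R_scope.

Definition I0T (T : R) (t : R) : Prop := 0 <= t <= T.

Definition cont_on_0T (T : R) (v : R -> R) : Prop :=
  forall t, I0T T t -> filterlim v (within (I0T T) (locally t)) (locally (v t)).

Definition admissible (T L Vmax : R) (v : R -> R) : Prop :=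
  cont_on_0T T v /\
  v 0 = 0 /\
  (forall t, I0T T t -> 0 <= v t <= Vmax) /\
  RInt v 0 T <= L /\
  (exists t, I0T T t /\ v t <> 0).

Definition pos (v : R -> R) (t : R) : R := RInt v 0 t.

Definition SpVar (T : R) (v : R -> R) : R :=
  / T * RInt (fun t => (pos v t - / T * RInt (pos v) 0 T) ^ 2) 0 T.

Definition Energy (T ma a1 a2 : R) (v : R -> R) : R :=
  / 2 * ma * (v T) ^ 2 + RInt (fun t => a1 * (v t) ^ 2 + a2 * (v t) ^ 3) 0 T.

Definition SEE (T ma a1 : R) (v : R -> R) : R :=
  SpVar T v / Energy T ma a1 0 v.

Definition vstar (T L Vmax : R) (t : R) : R :=
  Rmin Vmax (PI * L / (2 * T)) * sin (PI * t / T).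

(* Main.v *)
Require Import Defs.
From Stdlib Require Import Reals.
From Coquelicot Require Import Coquelicot.
From Stdlib Require Import Lra.
Open Scope R_scope.

Lemma cR_plus (f g : R -> R) x : continuous f x -> continuous g x -> continuous (fun t => f t + g t) x.
Proof. intros; apply (continuous_plus f g x); auto. Qed.
Lemma cR_mult (f g : R -> R) x : continuous f x -> continuous g x -> continuous (fun t => f t * g t) x.
Proof. intros; apply (continuous_mult f g x); auto. Qed.
Lemma cR_const (c : R) x : continuous (fun _ : R => c) x.
Proof. apply continuous_const. Qed.
Lemma cR_id x : continuous (fun t : R => t) x.
Proof. apply continuous_id. Qed.
Lemma cR_opp (f : R -> R) x : continuous f x -> continuous (fun t => - f t) x.
Proof. intros H. apply (continuous_ext (fun t => (-1) * f t)). intros; simpl; ring.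
  apply cR_mult; auto. apply cR_const. Qed.
Lemma cR_minus (f g : R -> R) x : continuous f x -> continuous g x -> continuous (fun t => f t - g t) x.
Proof. intros. apply cR_plus; auto. apply cR_opp; auto. Qed.
Lemma cR_pow2 (f : R -> R) x : continuous f x -> continuous (fun t => f t ^ 2) x.
Proof. intros. apply (continuous_ext (fun t => f t * f t)). intros; simpl; ring. apply cR_mult; auto. Qed.

Lemma exR (f : R -> R) a b : (forall t, continuous f t) -> ex_RInt f a b.
Proof. intros; apply (ex_RInt_continuous (V:=R_CompleteNormedModule)); auto. Qed.
Lemma RInt_add (f g : R -> R) a b : ex_RInt f a b -> ex_RInt g a b ->
  RInt (fun t => f t + g t) a b = RInt f a b + RInt g a b.
Proof. intros; apply (RInt_plus f g a b); auto. Qed.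
Lemma RInt_cmul (f : R -> R) a b c : ex_RInt f a b ->
  RInt (fun t => c * f t) a b = c * RInt f a b.
Proof. intros; apply (RInt_scal f a b c); auto. Qed.
Lemma RInt_sub (f g : R -> R) a b : ex_RInt f a b -> ex_RInt g a b ->
  RInt (fun t => f t - g t) a b = RInt f a b - RInt g a b.
Proof. intros; apply (RInt_minus f g a b); auto. Qed.
Lemma RInt_cst (c a b : R) : RInt (fun _ => c) a b = (b - a) * c.
Proof. rewrite RInt_const. reflexivity. Qed.
Lemma RInt_deriv (F f : R -> R) a b : (forall t, is_derive F t (f t)) -> (forall t, continuous f t) ->
  RInt f a b = F b - F a.
Proof. intros. apply is_RInt_unique. apply (is_RInt_derive F f a b); auto. Qed.
Lemma is_derive_eqv (f : R -> R) x d1 d2 : is_derive f x d1 -> d1 = d2 -> is_derive f x d2.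
Proof. intros H ->; auto. Qed.
Lemma deriv_cont (f : R -> R) x d : is_derive f x d -> continuous f x.
Proof. intros H. apply (ex_derive_continuous (K:=R_AbsRing) (V:=R_NormedModule)). exists d; auto. Qed.

Lemma RInt_pos_pt (g : R->R) T t0 : 0<T -> (forall t, continuous g t) ->
  (forall t, 0<=t<=T -> 0 <= g t) -> 0<=t0<=T -> 0 < g t0 -> 0 < RInt g 0 T.
Proof.
  intros HT Hc Hp Ht0 Hg.
  assert (Hl : locally t0 (fun t => g t0 / 2 < g t)).
  { apply (Hc t0 (fun y => g t0 / 2 < y)).
    assert (He : 0 < g t0 / 2) by lra.
    exists (mkposreal _ He). intros y Hy. simpl in Hy.
    unfold ball in Hy; simpl in Hy. unfold AbsRing_ball, abs, minus, plus, opp in Hy; simpl in Hy.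
    apply Rabs_def2 in Hy. lra. }
  destruct Hl as [d Hd].
  set (c1 := Rmax 0 (t0 - d/2)). set (d1 := Rmin T (t0 + d/2)).
  assert (Hd0 := cond_pos d).
  assert (c1 < d1).
  { unfold c1, d1, Rmax, Rmin. destruct (Rle_dec 0 (t0 - d/2)); destruct (Rle_dec T (t0 + d/2)); lra. }
  assert (0 <= c1) by (unfold c1; apply Rmax_l).
  assert (d1 <= T) by (unfold d1; apply Rmin_l).
  assert (t0 - d/2 <= c1) by (unfold c1; apply Rmax_r).
  assert (d1 <= t0 + d/2) by (unfold d1; apply Rmin_r).
  rewrite <- (RInt_Chasles g 0 c1 T) by (apply exR; auto).
  rewrite <- (RInt_Chasles g c1 d1 T) by (apply exR; auto).
  simpl.
  assert (0 <= RInt g 0 c1).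
  { apply RInt_ge_0; auto. apply exR; auto. intros; apply Hp; lra. }
  assert (0 <= RInt g d1 T).
  { apply RInt_ge_0; auto. apply exR; auto. intros; apply Hp; lra. }
  assert (0 < RInt g c1 d1).
  { apply RInt_gt_0; auto. intros x Hx.
    assert (g t0 / 2 < g x); [|lra].
    apply Hd. unfold ball; simpl. unfold AbsRing_ball, abs, minus, plus, opp; simpl.
    apply Rabs_def1; lra. }
  unfold plus; simpl. lra.
Qed.
Lemma dconst (c x : R) : is_derive (fun _ : R => c) x 0.
Proof. apply (is_derive_const (K:=R_AbsRing) (V:=R_NormedModule)). Qed.
Ltac toR := match goal with |- ?A = ?B => change (@eq R A B) end.

Lemma cot_deriv (b d t : R) : sin (b*t+d) <> 0 ->
  is_derive (fun t => b * cos (b*t+d) / sin (b*t+d)) t (- b^2 / sin (b*t+d) ^ 2).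
Proof.
  intros Hs. auto_derive. auto.
  assert (H := sin2_cos2 (b*t+d)). unfold Rsqr in H. assert (E : - b ^ 2 * sin (b * t + d) ^ 2 - b ^ 2 * cos (b * t + d) ^ 2 = - b^2).
  { replace (- b ^ 2 * sin (b * t + d) ^ 2 - b ^ 2 * cos (b * t + d) ^ 2) with (- b^2 * (sin (b * t + d) * sin (b * t + d) + cos (b * t + d) * cos (b * t + d))) by ring. rewrite H. ring. }
  field_simplify; auto. rewrite E. reflexivity.
Qed.

Lemma dirichlet_b (z y : R->R) T b : 0<T -> 0<b -> b*T < PI ->
  (forall t, is_derive z t (y t)) -> (forall t, continuous y t) -> z 0 = 0 -> z T = 0 ->
  b^2 * RInt (fun t => z t^2) 0 T <= RInt (fun t => y t^2) 0 T.
Proof.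
  intros HT Hb HbT Hz Hy Z0 ZT.
  set (d := (PI - b*T)/2).
  assert (Hs : forall t, 0 <= t <= T -> 0 < sin (b*t+d)).
  { intros t Ht. apply sin_gt_0; unfold d; nra. }
  set (c := fun t => b * cos (b*t+d) / sin (b*t+d)).
  set (s2 := fun t => / sin (b*t+d) ^ 2).
  set (F := fun t => z t ^ 2 * c t).
  set (F' := fun t => 2 * z t * y t * c t - b^2 * z t ^ 2 * s2 t).
  assert (Hcz : forall t, continuous z t) by (intros t; apply deriv_cont with (y t); auto).
  assert (Hc : forall t, 0 <= t <= T -> is_derive c t (- b^2 * s2 t)).
  { intros t Ht. unfold s2. apply is_derive_eqv with (- b^2 / sin (b*t+d) ^ 2).
    apply cot_deriv. specialize (Hs t Ht); lra. simpl; unfold Rdiv; ring. }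
  assert (Hcc : forall t, 0 <= t <= T -> continuous c t).
  { intros t Ht. apply deriv_cont with (- b^2 * s2 t). auto. }
  assert (Hs2 : forall t, 0 <= t <= T -> continuous s2 t).
  { intros t Ht. unfold s2. apply (ex_derive_continuous (K:=R_AbsRing) (V:=R_NormedModule)).
    auto_derive. specialize (Hs t Ht). nra. }
  assert (HF : forall t, 0 <= t <= T -> is_derive F t (F' t)).
  { intros t Ht. unfold F, F'.
    apply is_derive_eqv with (plus (mult (INR 2 * y t * z t ^ Init.Nat.pred 2) (c t)) (mult (z t ^ 2) (- b^2 * s2 t))).
    apply (is_derive_mult (fun t => z t ^ 2) c). apply is_derive_pow; auto. auto.
    intros; apply Rmult_comm. unfold plus, mult; simpl. ring. }
  assert (HF'c : forall t, 0 <= t <= T -> continuous F' t).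
  { intros t Ht. unfold F'. apply cR_minus.
    apply cR_mult; [|auto]. apply cR_mult; [|auto]. apply cR_mult; [apply cR_const|auto].
    apply cR_mult; [|auto]. apply cR_mult; [apply cR_const|]. apply cR_pow2; auto. }
  assert (HI : is_RInt F' 0 T (minus (F T) (F 0))).
  { apply (is_RInt_derive (V:=R_CompleteNormedModule)); rewrite Rmin_left, Rmax_right; try lra; auto. }
  assert (HF0 : minus (F T) (F 0) = 0).
  { unfold F, minus, plus, opp; simpl. rewrite Z0, ZT. ring. }
  rewrite HF0 in HI.
  set (g := fun t => (y t - z t * c t) ^ 2).
  assert (Hg : 0 <= RInt g 0 T).
  { apply RInt_ge_0. lra.
    apply (ex_RInt_continuous (V:=R_CompleteNormedModule)). rewrite Rmin_left, Rmax_right; try lra.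
    intros t Ht. unfold g. apply cR_pow2. apply cR_minus; auto. apply cR_mult; auto.
    intros; unfold g; apply pow2_ge_0. }
  assert (Hge : RInt g 0 T = RInt (fun t => (y t ^ 2 + (- b^2) * z t ^ 2) - F' t) 0 T).
  { apply RInt_ext. rewrite Rmin_left, Rmax_right; try lra. intros t Ht.
    unfold g, F', c, s2. assert (0 < sin (b*t+d)) by (apply Hs; lra).
    assert (H2 := sin2_cos2 (b*t+d)). unfold Rsqr in H2.
    assert (Hc2 : cos (b*t+d) ^ 2 = 1 - sin (b*t+d) ^ 2) by (simpl; lra).
    field_simplify; try lra. toR. rewrite Hc2. field. lra. }
  rewrite Hge in Hg.
  rewrite RInt_sub in Hg. rewrite RInt_add in Hg. rewrite RInt_cmul in Hg.
  rewrite (is_RInt_unique _ _ _ _ HI) in Hg. lra.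
  apply exR; intros; apply cR_pow2; auto.
  apply exR; intros; apply cR_pow2; auto.
  apply exR; intros; apply cR_mult; [apply cR_const|apply cR_pow2; auto].
  apply exR; intros; apply cR_plus; [apply cR_pow2; auto|apply cR_mult; [apply cR_const|apply cR_pow2; auto]].
  exists 0; auto.
Qed.

Lemma dirichlet (z y : R->R) T : 0<T ->
  (forall t, is_derive z t (y t)) -> (forall t, continuous y t) -> z 0 = 0 -> z T = 0 ->
  (PI/T)^2 * RInt (fun t => z t^2) 0 T <= RInt (fun t => y t^2) 0 T.
Proof.
  intros HT Hz Hy Z0 ZT.
  assert (Hcz : forall t, continuous z t) by (intros t; apply deriv_cont with (y t); auto).
  set (Z := RInt (fun t => z t^2) 0 T). set (Y := RInt (fun t => y t^2) 0 T).
  assert (HZ : 0 <= Z). { apply RInt_ge_0. lra. apply exR; intros; apply cR_pow2; auto. intros; apply pow2_ge_0. }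
  assert (HY : 0 <= Y). { apply RInt_ge_0. lra. apply exR; intros; apply cR_pow2; auto. intros; apply pow2_ge_0. }
  set (A := (PI/T)^2).
  assert (HA : 0 < PI/T). { apply Rdiv_lt_0_compat; auto. apply PI_RGT_0. }
  assert (HA2 : 0 < A) by (unfold A; nra).
  destruct (Rle_or_lt (A * Z) Y) as [|Hlt]; auto. exfalso.
  assert (HZp : 0 < Z) by nra.
  assert (HYZ : Y / Z < A). { apply (Rmult_lt_reg_r Z); auto. unfold Rdiv. rewrite Rmult_assoc, Rinv_l; lra. }
  assert (HYZ0 : 0 <= Y / Z) by (apply Rdiv_le_0_compat; auto).
  set (b := sqrt ((Y/Z + A)/2)).
  assert (Hb2 : b * b = (Y/Z + A)/2) by (apply sqrt_sqrt; lra).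
  assert (Hb : 0 < b) by (apply sqrt_lt_R0; lra).
  assert (HbA : b < PI/T). { unfold A in *. nra. }
  assert (HbT : b * T < PI). { apply (Rmult_lt_compat_r T) in HbA; auto. unfold Rdiv in HbA. rewrite Rmult_assoc, Rinv_l in HbA; lra. }
  assert (H := dirichlet_b z y T b HT Hb HbT Hz Hy Z0 ZT). fold Z Y in H.
  assert (b^2 * Z = (Y + A*Z)/2). { simpl. rewrite Rmult_1_r, Hb2. field. lra. }
  lra.
Qed.
Ltac contR := repeat first [apply cR_const | apply cR_id | apply cR_pow2 | apply cR_plus | apply cR_minus | apply cR_mult ].


Definition xm (T : R) (w : R->R) : R := / T * RInt (Defs.pos w) 0 T.
Definition yf T w t := Defs.pos w t - xm T w.
Definition zf T w t := RInt (yf T w) 0 t.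

Section Core.
Variables (T : R) (w : R -> R).
Hypothesis HT : 0 < T.
Hypothesis Hw : forall t, continuous w t.

Lemma dx t : is_derive (Defs.pos w) t (w t).
Proof.
  apply (is_derive_RInt w (Defs.pos w) 0 t).
  - apply filter_forall. intros b. apply (RInt_correct (V:=R_CompleteNormedModule)). apply exR; auto.
  - auto.
Qed.
Lemma dy t : is_derive (yf T w) t (w t).
Proof.
  unfold yf. apply is_derive_eqv with (w t - 0).
  apply (is_derive_minus (Defs.pos w) (fun _ => xm T w)). apply dx. apply dconst. simpl; ring.
Qed.
Lemma cy t : continuous (yf T w) t.
Proof. apply deriv_cont with (w t). apply dy. Qed.
Lemma dz t : is_derive (zf T w) t (yf T w t).
Proof.
  apply (is_derive_RInt (yf T w) (zf T w) 0 t).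
  - apply filter_forall. intros b. apply (RInt_correct (V:=R_CompleteNormedModule)). apply exR; intros; apply cy.
  - apply cy.
Qed.
Lemma cz t : continuous (zf T w) t.
Proof. apply deriv_cont with (yf T w t). apply dz. Qed.
Lemma cx t : continuous (Defs.pos w) t.
Proof. apply deriv_cont with (w t). apply dx. Qed.
Lemma z0 : zf T w 0 = 0.
Proof. unfold zf. apply (RInt_point (V:=R_CompleteNormedModule)). Qed.
Lemma zT : zf T w T = 0.
Proof.
  unfold zf, yf. rewrite RInt_sub. rewrite RInt_cst. unfold xm. set (I := RInt (Defs.pos w) 0 T). simpl. field. lra.
  apply exR; apply cx. apply exR; intros; apply cR_const.
Qed.
Lemma IBP : RInt (fun t => yf T w t ^ 2) 0 T = - RInt (fun t => zf T w t * w t) 0 T.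
Proof.
  assert (H : RInt (fun t => yf T w t ^ 2 + zf T w t * w t) 0 T = 0).
  { rewrite (RInt_deriv (fun t => zf T w t * yf T w t)).
    rewrite z0, zT. simpl; ring.
    intros t. apply is_derive_eqv with (plus (mult (yf T w t) (yf T w t)) (mult (zf T w t) (w t))).
    apply (is_derive_mult (zf T w) (yf T w)). apply dz. apply dy. intros; apply Rmult_comm.
    unfold plus, mult; simpl. ring.
    intros t. apply cR_plus. apply cR_pow2, cy. apply cR_mult; auto. apply cz. }
  rewrite RInt_add in H. lra.
  apply exR; intros; apply cR_pow2, cy. apply exR; intros; apply cR_mult; auto; apply cz.
Qed.

Let a := PI / T.
Lemma a_pos : 0 < a.
Proof. unfold a. apply Rdiv_lt_0_compat; auto. apply PI_RGT_0. Qed.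
Let h t := a * zf T w t + w t / a.
Lemma ch t : continuous h t.
Proof. unfold h. apply cR_plus. apply cR_mult. apply cR_const. apply cz.
  apply cR_mult; auto. apply cR_const. Qed.
Lemma hsum : RInt (fun t => h t ^ 2) 0 T =
  a^2 * RInt (fun t => zf T w t ^ 2) 0 T + 2 * RInt (fun t => zf T w t * w t) 0 T
  + / a^2 * RInt (fun t => w t ^ 2) 0 T.
Proof.
  assert (Ha := a_pos).
  rewrite (RInt_ext _ (fun t => (a^2 * zf T w t ^ 2 + 2 * (zf T w t * w t)) + / a^2 * w t ^ 2)).
  assert (c1 : forall t, continuous (fun t => zf T w t ^ 2) t) by (intros; apply cR_pow2, cz).
  assert (c2 : forall t, continuous (fun t => zf T w t * w t) t) by (intros; apply cR_mult; [apply cz|auto]).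
  assert (c3 : forall t, continuous (fun t => w t ^ 2) t) by (intros; apply cR_pow2; auto).
  rewrite !RInt_add, !RInt_cmul. reflexivity.
  all: try (apply exR; intro t).
  apply c3. apply c2. apply c1. apply cR_mult; [apply cR_const|apply c1].
  apply cR_mult; [apply cR_const|apply c2].
  apply cR_plus; (apply cR_mult; [apply cR_const|]); [apply c1|apply c2].
  apply cR_mult; [apply cR_const|apply c3].
  intros t _. unfold h. toR. field. lra.
Qed.
Lemma wirt_aux : a^2 * RInt (fun t => zf T w t ^ 2) 0 T <= RInt (fun t => yf T w t ^ 2) 0 T.
Proof.
  apply dirichlet; auto. apply dz. apply cy. apply z0. apply zT.
Qed.
Lemma h2_pos : 0 <= RInt (fun t => h t ^ 2) 0 T.
Proof. apply RInt_ge_0. lra. apply exR; intros; apply cR_pow2, ch. intros; apply pow2_ge_0. Qed.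
Lemma wirt : a^2 * RInt (fun t => yf T w t ^ 2) 0 T <= RInt (fun t => w t ^ 2) 0 T.
Proof.
  assert (Ha := a_pos). assert (H1 := hsum). assert (H2 := wirt_aux). assert (H3 := h2_pos).
  assert (H4 := IBP).
  set (Y := RInt (fun t => yf T w t ^ 2) 0 T) in *.
  set (W := RInt (fun t => w t ^ 2) 0 T) in *.
  set (Z := RInt (fun t => zf T w t ^ 2) 0 T) in *.
  set (ZW := RInt (fun t => zf T w t * w t) 0 T) in *.
  assert (Y <= / a^2 * W) by lra.
  apply (Rmult_le_compat_l (a^2)) in H. rewrite <- Rmult_assoc, Rinv_r, Rmult_1_l in H. auto.
  apply pow_nonzero; lra. apply pow2_ge_0.
Qed.
Lemma wirt_eq : a^2 * RInt (fun t => yf T w t ^ 2) 0 T = RInt (fun t => w t ^ 2) 0 T ->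
  forall t, 0 <= t <= T -> w t = - a^2 * zf T w t.
Proof.
  intros HE t Ht.
  assert (Ha := a_pos). assert (H1 := hsum). assert (H2 := wirt_aux). assert (H3 := h2_pos).
  assert (H4 := IBP).
  set (Y := RInt (fun t => yf T w t ^ 2) 0 T) in *.
  set (W := RInt (fun t => w t ^ 2) 0 T) in *.
  set (Z := RInt (fun t => zf T w t ^ 2) 0 T) in *.
  set (ZW := RInt (fun t => zf T w t * w t) 0 T) in *.
  assert (HW : / a^2 * W = Y). { rewrite <- HE. field. lra. }
  assert (H0 : RInt (fun t => h t ^ 2) 0 T = 0) by lra.
  destruct (Req_dec (h t) 0) as [Hh|Hh].
  - unfold h in Hh. apply (Rmult_eq_compat_l a) in Hh. 
    replace (a * (a * zf T w t + w t / a)) with (a^2 * zf T w t + w t) in Hh by (field; lra). lra.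
  - exfalso. assert (0 < RInt (fun t => h t ^ 2) 0 T); [|lra].
    apply (RInt_pos_pt _ T t); auto. intros; apply cR_pow2, ch. intros; apply pow2_ge_0.
    apply pow2_gt_0; auto.
Qed.
Lemma wirt_eq_conv : (forall t, 0 <= t <= T -> w t = - a^2 * zf T w t) ->
  a^2 * RInt (fun t => yf T w t ^ 2) 0 T = RInt (fun t => w t ^ 2) 0 T.
Proof.
  intros Hz. assert (Ha := a_pos). rewrite IBP.
  rewrite (RInt_ext (fun t => zf T w t * w t) (fun t => (- / a^2) * w t ^ 2)).
  rewrite RInt_cmul. field. lra. apply exR; intros; apply cR_pow2; auto.
  rewrite Rmin_left, Rmax_right; try lra. intros t Ht. rewrite Hz by lra. toR. field. lra.
Qed.
End Core.

Lemma const_on (f df : R->R) T : (forall t, is_derive f t (df t)) ->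
  (forall t, 0<=t<=T -> df t = 0) -> forall t, 0<=t<=T -> f t = f 0.
Proof.
  intros Hd H0 t Ht.
  destruct (MVT_gen f 0 t df) as [c [Hc E]].
  - intros; auto.
  - intros x _. apply continuity_pt_filterlim. apply deriv_cont with (df x); auto.
  - rewrite Rmin_left, Rmax_right in Hc by lra. rewrite H0 in E by lra. lra.
Qed.

Lemma ode (z y w : R->R) T : 0<T -> (forall t, is_derive z t (y t)) -> (forall t, is_derive y t (w t)) ->
  z 0 = 0 -> (forall t, 0<=t<=T -> w t = - (PI/T)^2 * z t) ->
  exists k, forall t, 0<=t<=T -> w t = k * sin (PI/T * t).
Proof.
  intros HT Hz Hy Z0 Hw.
  set (a := PI/T) in *.
  set (P := fun t => y t * sin (a*t) - a * z t * cos (a*t)).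
  set (Q := fun t => y t * cos (a*t) + a * z t * sin (a*t)).
  assert (HP : forall t, is_derive P t ((w t + a^2 * z t) * sin (a*t))).
  { intros t. unfold P. auto_derive.
    - split. exists (w t); auto. split; auto. exists (y t); auto.
    - change (fun x : R => y x) with y; change (fun x : R => z x) with z; rewrite (is_derive_unique _ _ _ (Hy t)), (is_derive_unique _ _ _ (Hz t)). simpl; ring. }
  assert (HQ : forall t, is_derive Q t ((w t + a^2 * z t) * cos (a*t))).
  { intros t. unfold Q. auto_derive.
    - split. exists (w t); auto. split; auto. exists (y t); auto.
    - change (fun x : R => y x) with y; change (fun x : R => z x) with z; rewrite (is_derive_unique _ _ _ (Hy t)), (is_derive_unique _ _ _ (Hz t)). simpl; ring. }
  assert (CP := const_on P _ T HP). assert (CQ := const_on Q _ T HQ).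
  exists (- a * Q 0). intros t Ht.
  assert (E1 : P t = P 0). { apply CP; auto. intros s Hs. rewrite Hw by auto. ring. }
  assert (E2 : Q t = Q 0). { apply CQ; auto. intros s Hs. rewrite Hw by auto. ring. }
  assert (P0 : P 0 = 0) by (unfold P; rewrite Z0, Rmult_0_r, sin_0; ring).
  rewrite P0 in E1. unfold P in E1.
  assert (E1' : y t * sin (a*t) = a * z t * cos (a*t)) by lra.
  rewrite <- E2. unfold Q. rewrite Hw by auto.
  assert (H2 := sin2_cos2 (a*t)). unfold Rsqr in H2.
  transitivity (-a * ((y t * sin (a*t)) * cos (a*t) + a * z t * sin (a*t) * sin (a*t))); [|ring].
  rewrite E1'. replace (cos (a*t) * cos (a*t)) with (1 - sin (a*t) * sin (a*t)) by lra.
  replace (a * z t * cos (a * t) * cos (a * t)) with (a * z t * (cos (a * t) * cos (a * t))) by ring.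
  replace (cos (a*t) * cos (a*t)) with (1 - sin (a*t) * sin (a*t)) by lra. ring.
Qed.
Ltac hypR H := match type of H with ?A = ?B => change (@eq R A B) in H end.

Lemma ksin (T k : R) (w : R -> R) : 0 < T -> (forall t, continuous w t) ->
  (forall t, 0 <= t <= T -> w t = k * sin (PI/T * t)) ->
  (forall t, 0 <= t <= T -> w t = - (PI/T)^2 * zf T w t).
Proof.
  intros HT Hw Hk.
  assert (Ha : 0 < PI/T) by (apply Rdiv_lt_0_compat; auto; apply PI_RGT_0).
  set (a := PI/T) in *.
  assert (HaT : a * T = PI) by (unfold a; field; lra).
  assert (Hx : forall t, 0 <= t <= T -> Defs.pos w t = k * (1 - cos (a*t)) / a).
  { intros t Ht. unfold Defs.pos.
    rewrite (RInt_ext w (fun s => k * sin (a*s))).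
    rewrite (RInt_deriv (fun s => - k * cos (a*s) / a)). rewrite Rmult_0_r, cos_0. field; lra.
    intros s. auto_derive. lra. field. lra.
    intros s. apply cR_mult. apply cR_const. apply continuous_sin_comp. apply cR_mult. apply cR_const. apply cR_id.
    rewrite Rmin_left, Rmax_right; try lra. intros; apply Hk; lra. }
  assert (Hm : xm T w = k / a).
  { unfold xm. rewrite (RInt_ext (Defs.pos w) (fun t => k * (1 - cos (a*t)) / a)).
    rewrite (RInt_deriv (fun s => k * (s - sin (a*s) / a) / a)).
    rewrite HaT, sin_PI, Rmult_0_r, sin_0. field. split; lra.
    intros s. auto_derive. lra. field. lra.
    intros s. apply cR_mult. apply cR_mult. apply cR_const. apply cR_minus. apply cR_const.
      apply continuous_cos_comp. apply cR_mult. apply cR_const. apply cR_id. apply cR_const.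
    rewrite Rmin_left, Rmax_right; try lra. intros; apply Hx; lra. }
  intros t Ht. rewrite Hk by auto. unfold zf.
  rewrite (RInt_ext (yf T w) (fun s => - k * cos (a*s) / a)).
  rewrite (RInt_deriv (fun s => - k * sin (a*s) / a^2)). rewrite Rmult_0_r, sin_0. field; lra.
  intros s. auto_derive. lra. field. lra.
  intros s. apply cR_mult. apply cR_mult. apply cR_const. 
      apply continuous_cos_comp. apply cR_mult. apply cR_const. apply cR_id. apply cR_const.
  rewrite Rmin_left, Rmax_right; try lra. intros s Hs. unfold yf. rewrite Hx, Hm by lra. toR. field. lra.
Qed.

Lemma ksin_int (T k : R) (w : R -> R) : 0 < T ->
  (forall t, 0 <= t <= T -> w t = k * sin (PI/T * t)) ->
  RInt w 0 T = 2 * k / (PI/T).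
Proof.
  intros HT Hk.
  assert (Ha : 0 < PI/T) by (apply Rdiv_lt_0_compat; auto; apply PI_RGT_0).
  set (a := PI/T) in *.
  assert (HaT : a * T = PI) by (unfold a; field; lra).
  rewrite (RInt_ext w (fun s => k * sin (a*s))).
  rewrite (RInt_deriv (fun s => - k * cos (a*s) / a)). rewrite HaT, Rmult_0_r, cos_0, cos_PI. toR. field; lra.
  intros s. auto_derive. lra. field. lra.
  intros s. apply cR_mult. apply cR_const. apply continuous_sin_comp. apply cR_mult. apply cR_const. apply cR_id.
  rewrite Rmin_left, Rmax_right; try lra. intros; apply Hk; lra.
Qed.

Lemma ksin_sq (T k : R) (w : R -> R) : 0 < T ->
  (forall t, 0 <= t <= T -> w t = k * sin (PI/T * t)) ->
  RInt (fun t => w t ^ 2) 0 T = k^2 * RInt (fun t => sin (PI/T * t) ^ 2) 0 T.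
Proof.
  intros HT Hk.
  rewrite <- RInt_cmul. apply RInt_ext. rewrite Rmin_left, Rmax_right; try lra.
  intros t Ht. rewrite Hk by lra. toR. ring.
  apply exR; intros; apply cR_pow2. apply continuous_sin_comp. apply cR_mult. apply cR_const. apply cR_id.
Qed.

Definition clamp (T t : R) := Rmax 0 (Rmin T t).

Lemma clamp_lip T s t : 0 < T -> Rabs (clamp T s - clamp T t) <= Rabs (s - t).
Proof.
  intros HT. unfold clamp, Rmax, Rmin.
  destruct (Rle_dec T s); destruct (Rle_dec T t);
  repeat match goal with |- context [Rle_dec ?x ?y] => destruct (Rle_dec x y) end;
  unfold Rabs; repeat match goal with |- context [Rcase_abs ?x] => destruct (Rcase_abs x) end; lra.
Qed.

Lemma clamp_in T t : 0 < T -> I0T T (clamp T t).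
Proof. intros HT. unfold I0T, clamp, Rmax, Rmin.
  repeat match goal with |- context [Rle_dec ?x ?y] => destruct (Rle_dec x y) end; lra. Qed.

Lemma clamp_id T t : 0 <= t <= T -> clamp T t = t.
Proof. intros Ht. unfold clamp. rewrite Rmin_right by lra. rewrite Rmax_right by lra. reflexivity. Qed.

Lemma ext_cont (v : R->R) T : 0<T -> cont_on_0T T v -> forall t, continuous (fun t => v (clamp T t)) t.
Proof.
  intros HT Hv t P HP.
  assert (H := Hv (clamp T t) (clamp_in T t HT) P HP).
  simpl in H. unfold within in H. destruct H as [eps He].
  exists eps. intros s Hs. apply He.
  unfold ball in *; simpl in *. unfold AbsRing_ball, abs, minus, plus, opp in *; simpl in *.
  assert (L := clamp_lip T s t HT). unfold Rminus in L. lra.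
  apply clamp_in; auto.
Qed.

Lemma Energy_eq T ma a1 (f : R -> R) : (forall t, continuous f t) ->
  Energy T ma a1 0 f = /2 * ma * (f T)^2 + a1 * RInt (fun t => f t ^2) 0 T.
Proof.
  intros Hf. unfold Energy. f_equal.
  rewrite (RInt_ext _ (fun t => a1 * f t ^ 2)). apply RInt_cmul.
  apply exR; intros; apply cR_pow2; auto.
  intros x _. toR. ring.
Qed.

Lemma SpVar_eq T (f : R -> R) : SpVar T f = / T * RInt (fun t => yf T f t ^ 2) 0 T.
Proof. reflexivity. Qed.

Section Tr.
Variables (T : R) (v : R -> R).
Hypothesis HT : 0 < T.
Let w := fun t => v (clamp T t).
Lemma pos_tr t : 0 <= t <= T -> Defs.pos w t = Defs.pos v t.
Proof.
  intros Ht. unfold Defs.pos. apply RInt_ext. rewrite Rmin_left, Rmax_right by lra.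
  intros x Hx. unfold w. rewrite clamp_id by lra. reflexivity.
Qed.
Lemma SpVar_tr : SpVar T w = SpVar T v.
Proof.
  unfold SpVar. rewrite (RInt_ext (Defs.pos w) (Defs.pos v)).
  f_equal. apply RInt_ext. rewrite Rmin_left, Rmax_right by lra. intros x Hx. rewrite pos_tr by lra. reflexivity.
  rewrite Rmin_left, Rmax_right by lra. intros x Hx. apply pos_tr; lra.
Qed.
Lemma int_tr (f : R -> R) : RInt (fun t => f (w t)) 0 T = RInt (fun t => f (v t)) 0 T.
Proof.
  apply RInt_ext. rewrite Rmin_left, Rmax_right by lra. intros x Hx. unfold w. rewrite clamp_id by lra. reflexivity.
Qed.
Lemma SEE_tr ma a1 : SEE T ma a1 w = SEE T ma a1 v.
Proof.
  unfold SEE. rewrite SpVar_tr. unfold Energy.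
  rewrite (int_tr (fun x => a1 * x ^ 2 + 0 * x ^ 3)).
  unfold w. rewrite clamp_id by lra. reflexivity.
Qed.
End Tr.

Lemma mdc (x a : R) : a <> 0 -> x = a * x / a.
Proof. intros; field; auto. Qed.

Theorem mainTheorem2 (T L Vmax ma a1 : R) :
  0 < T -> 0 < L -> 0 < Vmax -> 0 < ma -> 0 < a1 ->
  admissible T L Vmax (vstar T L Vmax) /\
  (forall v, admissible T L Vmax v ->
     SEE T ma a1 v <= SEE T ma a1 (vstar T L Vmax)) /\
  (forall v, admissible T L Vmax v ->
     SEE T ma a1 v = SEE T ma a1 (vstar T L Vmax) ->
     SpVar T v <= SpVar T (vstar T L Vmax)).
Proof.
  intros HT HL HV Hma Ha1.
  assert (Ha : 0 < PI/T) by (apply Rdiv_lt_0_compat; auto; apply PI_RGT_0).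
  assert (HPI := PI_RGT_0).
  assert (HaT : PI / T * T = PI) by (field; lra).
  set (c := Rmin Vmax (PI * L / (2 * T))).
  assert (Hc2 : 0 < PI * L / (2 * T)) by (apply Rdiv_lt_0_compat; [apply Rmult_lt_0_compat; [apply PI_RGT_0|lra]|lra]).
  assert (Hc : 0 < c) by (unfold c; apply Rmin_glb_lt; lra).
  set (u := vstar T L Vmax).
  assert (Hu : forall t, u t = c * sin (PI / T * t)).
  { intros t. unfold u, vstar. fold c. f_equal. f_equal. field. lra. }
  assert (Huc : forall t, continuous u t).
  { intros t. apply (continuous_ext (fun t => c * sin (PI / T * t))). intros; simpl; rewrite Hu; reflexivity.
    apply cR_mult. apply cR_const. apply continuous_sin_comp. apply cR_mult. apply cR_const. apply cR_id. }
  assert (Huk : forall t, 0 <= t <= T -> u t = c * sin (PI / T * t)) by auto.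
  set (J := (RInt (fun t => sin (PI / T * t) ^ 2) 0 T : R)).
  assert (Hsin1 : sin (PI / T * (T / 2)) = 1).
  { replace (PI / T * (T / 2)) with (PI / 2) by (field; lra). apply sin_PI2. }
  assert (HJ : 0 < J).
  { apply (RInt_pos_pt _ T (T/2)); auto.
    intros; apply cR_pow2. apply continuous_sin_comp. apply cR_mult. apply cR_const. apply cR_id.
    intros; apply pow2_ge_0. lra. rewrite Hsin1. lra. }
  set (S := / (T * (PI/T)^2 * a1)).
  assert (HSEEu : SEE T ma a1 u = S).
  { unfold SEE. rewrite SpVar_eq, Energy_eq by auto.
    assert (E := wirt_eq_conv T u HT Huc (ksin T c u HT Huc Huk)).
    rewrite (ksin_sq T c u HT Huk) in E |- *. fold J in E |- *.
    rewrite Hu, HaT, sin_PI.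
    assert (Y : RInt (fun t => yf T u t ^ 2) 0 T = c^2 * J / (PI/T)^2).
    { hypR E. rewrite <- E. apply mdc. apply pow_nonzero; lra. }
    rewrite Y. unfold S. field. repeat split; nra. }
  assert (Hu0 : forall t, 0 <= t <= T -> 0 <= u t <= Vmax).
  { intros t Ht. rewrite Hu.
    assert (0 <= sin (PI / T * t)) by (apply sin_ge_0; nra).
    assert (sin (PI / T * t) <= 1) by apply SIN_bound.
    assert (c <= Vmax) by (unfold c; apply Rmin_l). split; nra. }
  split; [|split].
  -
    split; [|split; [|split; [|split]]].
    + intros t _. intros P HP. apply (Huc t P) in HP. unfold within. simpl.
      destruct HP as [e He]. exists e. intros; apply He; auto.
    + rewrite Hu, Rmult_0_r, sin_0. ring.
    + intros t Ht; apply Hu0; auto.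
    + rewrite (ksin_int T c u HT Huk).
      assert (c <= PI * L / (2 * T)) by (unfold c; apply Rmin_r).
      apply (Rmult_le_reg_r (PI/T)); auto. unfold Rdiv at 1. rewrite Rmult_assoc, Rinv_l by lra.
      apply (Rmult_le_compat_l 2) in H; [|lra]. 
      replace (2 * (PI * L / (2 * T))) with (L * (PI / T)) in H by (field; lra). lra.
    + exists (T/2). split. unfold I0T; lra. rewrite Hu, Hsin1. lra.
  - intros v [Hv1 [Hv2 [Hv3 [Hv4 [t0 [Ht0 Hvt0]]]]]].
    fold u. rewrite HSEEu. rewrite <- (SEE_tr T v HT).
    set (w := fun t => v (clamp T t)).
    assert (Hw : forall t, continuous w t) by (apply ext_cont; auto).
    unfold SEE. rewrite SpVar_eq, Energy_eq by auto.
    assert (Hwi := wirt T w HT Hw).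
    set (Y := (RInt (fun t => yf T w t ^ 2) 0 T : R)) in *.
    set (W := (RInt (fun t => w t ^ 2) 0 T : R)) in *.
    assert (HW : 0 < W).
    { apply (RInt_pos_pt _ T t0); auto. intros; apply cR_pow2; auto. intros; apply pow2_ge_0.
      unfold w. rewrite clamp_id by (unfold I0T in Ht0; lra). apply pow2_gt_0; auto. }
    assert (HY : 0 <= Y).
    { apply RInt_ge_0. lra. apply exR; intros; apply cR_pow2; apply cy; auto. intros; apply pow2_ge_0. }
    assert (HE : a1 * W <= / 2 * ma * w T ^ 2 + a1 * W).
    { assert (0 <= w T ^ 2) by apply pow2_ge_0. assert (0 <= /2 * ma * w T ^2). 
      apply Rmult_le_pos; auto. apply Rmult_le_pos; lra. lra. }
    apply Rle_trans with (/ T * Y / (a1 * W)).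
    + unfold Rdiv. apply Rmult_le_compat_l. apply Rmult_le_pos; auto. left; apply Rinv_0_lt_compat; auto.
      apply Rinv_le_contravar; auto. apply Rmult_lt_0_compat; auto.
    + assert (HYW : Y <= W / (PI/T)^2).
      { apply (Rmult_le_reg_l ((PI/T)^2)). nra. replace ((PI / T) ^ 2 * (W / (PI / T) ^ 2)) with W by (field; lra). auto. }
      apply Rle_trans with (/ T * (W / (PI/T)^2) / (a1 * W)).
      * apply Rmult_le_compat_r. left; apply Rinv_0_lt_compat, Rmult_lt_0_compat; auto.
        apply Rmult_le_compat_l; auto. left; apply Rinv_0_lt_compat; auto.
      * right. unfold S. field. repeat split; lra.
  - intros v [Hv1 [Hv2 [Hv3 [Hv4 [t0 [Ht0 Hvt0]]]]]] Heq.
    fold u in Heq |- *. rewrite HSEEu in Heq. rewrite <- (SEE_tr T v HT) in Heq.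
    rewrite <- (SpVar_tr T v HT).
    set (w := fun t => v (clamp T t)) in *.
    assert (Hw : forall t, continuous w t) by (apply ext_cont; auto).
    unfold SEE in Heq. rewrite SpVar_eq, Energy_eq in Heq by auto.
    assert (Hwi := wirt T w HT Hw).
    set (Y := (RInt (fun t => yf T w t ^ 2) 0 T : R)) in *.
    set (W := (RInt (fun t => w t ^ 2) 0 T : R)) in *.
    assert (HW : 0 < W).
    { apply (RInt_pos_pt _ T t0); auto. intros; apply cR_pow2; auto. intros; apply pow2_ge_0.
      unfold w. rewrite clamp_id by (unfold I0T in Ht0; lra). apply pow2_gt_0; auto. }
    assert (HE : a1 * W <= / 2 * ma * w T ^ 2 + a1 * W).
    { assert (0 <= w T ^ 2) by apply pow2_ge_0. assert (0 <= /2 * ma * w T ^2). 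
      apply Rmult_le_pos; auto. apply Rmult_le_pos; lra. lra. }
    set (E := / 2 * ma * w T ^ 2 + a1 * W) in *.
    assert (HEp : 0 < E) by nra.
    assert (HYE : / T * Y = S * E). { rewrite <- Heq. field. lra. }
    assert (HS : 0 < S). { unfold S. apply Rinv_0_lt_compat. apply Rmult_lt_0_compat; [|lra]. apply Rmult_lt_0_compat; nra. }
    assert (HYW : (PI/T)^2 * Y = W).
    { apply Rle_antisym; auto.
      assert (S * (a1 * W) <= S * E) by (apply Rmult_le_compat_l; lra).
      assert (S * (a1 * W) = / T * (W / (PI/T)^2)) by (unfold S; field; lra).
      assert (W / (PI/T)^2 <= Y).
      { apply (Rmult_le_reg_l (/ T)). apply Rinv_0_lt_compat; auto. lra. }
      apply (Rmult_le_compat_l ((PI/T)^2)) in H1; [|nra].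
      replace ((PI / T) ^ 2 * (W / (PI / T) ^ 2)) with W in H1 by (field; lra). auto. }
    assert (Hz := wirt_eq T w HT Hw HYW).
    destruct (ode (zf T w) (yf T w) w T HT (dz T w Hw) (dy T w Hw) (z0 T w) Hz) as [k Hk].
    assert (Hk1 : w (T/2) = k) by (rewrite Hk by lra; rewrite Hsin1; ring).
    assert (Hk2 : 0 <= k <= Vmax).
    { rewrite <- Hk1. unfold w. rewrite clamp_id by lra. apply Hv3. unfold I0T; lra. }
    assert (Hk3 : k <= PI * L / (2 * T)).
    { assert (I := ksin_int T k w HT Hk). assert (Ivw : RInt v 0 T = RInt w 0 T).
      { apply RInt_ext. rewrite Rmin_left, Rmax_right by lra. intros x Hx. unfold w. rewrite clamp_id by lra. reflexivity. }
      rewrite Ivw, I in Hv4. apply (Rmult_le_compat_l (PI/T / 2)) in Hv4; [|lra].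
      replace (PI / T / 2 * (2 * k / (PI / T))) with k in Hv4 by (field; lra).
      replace (PI / T / 2 * L) with (PI * L / (2 * T)) in Hv4 by (field; lra). auto. }
    assert (Hkc : k <= c) by (unfold c; apply Rmin_glb; lra).
    rewrite SpVar_eq. fold Y.
    assert (HSu : SpVar T u = / T * (c^2 * J / (PI/T)^2)).
    { rewrite SpVar_eq. f_equal.
      assert (E2 := wirt_eq_conv T u HT Huc (ksin T c u HT Huc Huk)).
      rewrite (ksin_sq T c u HT Huk) in E2. fold J in E2. hypR E2. rewrite <- E2. apply mdc. apply pow_nonzero; lra. }
    rewrite HSu.
    assert (HWk : W = k^2 * J) by (apply ksin_sq; auto).
    assert (Y = k^2 * J / (PI/T)^2) by (rewrite <- HWk, <- HYW; apply mdc; apply pow_nonzero; lra).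
    rewrite H. apply Rmult_le_compat_l. left; apply Rinv_0_lt_compat; auto.
    unfold Rdiv. apply Rmult_le_compat_r. left; apply Rinv_0_lt_compat; nra.
    apply Rmult_le_compat_r. lra. nra.
Qed.
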